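(* Let $\vec{\mathcal G}$ be an ergodic graph of a deterministic two-player mean-payoff game and suppose $r\in\mathcal P^{\sigma,\tau}$ for some $(\sigma,\tau)\in\Xi$. Then for every edge $(i,j)\in E$ not used by $(\sigma,\tau)$ (i.e. $i\in V_{\max}$ and $j\ne\sigma(i)$, or $i\in V_{\min}$ and $j\ne\tau(i)$), $$Z_{ij}=\lambda^{\sigma,\tau}(r)+u^{\sigma,\tau}_i(r)-u^{\sigma,\tau}_j(r).$$
   Context: Setting: directed graph $\vec{\mathcal G}=([n],E)$ without multiple edges, each vertex having an outgoing edge, $[n]=V_{\max}\uplus V_{\min}$, weights $r\in\mathbb R^E$; $(x,r_{-ij})$ is $r$ with coordinate $ij$ replaced by $x$. Ergodic equation in $(\lambda,u)$: $\lambda+u_i=\max_{(i,j)\in E}\{r_{ij}+u_j\}$ ($i\in V_{\max}$), $\lambda+u_i=\min_{(i,j)\in E}\{r_{ij}+u_j\}$ ($i\in V_{\min}$); $u$ is a bias if $(\lambda,u)$ solves it; ergodic graph: solvable for every $r$. A pair of policies $(\sigma,\tau)$ is bias-induced if some bias makes every $\sigma(i)$ attain the max and every $\tau(i)$ attain the min. $\vec{\mathcal G}^{\sigma,\tau}$ keeps at each vertex only its chosen edge; $\Xi$: pairs for which it has exactly one directed cycle. For $(\sigma,\tau)\in\Xi$, $\lambda^{\sigma,\tau}(r)$ is the mean weight of that cycle and $u^{\sigma,\tau}(r)_l$ is the total weight, for edge weights $r_{ij}-\lambda^{\sigma,\tau}(r)$, of the path in $\vec{\mathcal G}^{\sigma,\tau}$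 from $l$ to the smallest-index vertex on the cycle. $\mathcal P^{\sigma,\tau}$: set of $r$ for which $(\sigma,\tau)$ is the only bias-induced pair; $\mathcal U=\bigcup_{\Xi}\mathcal P^{\sigma,\tau}$. For $i\in V_{\min}$: $Z_{ij}=\inf\{x: (x,r_{-ij})\in\mathcal U$ and the game with weights $(x,r_{-ij})$ has a bias-induced pair $(\sigma',\tau')\in\Xi$ with $\tau'(i)\ne j\}$; for $i\in V_{\max}$: $Z_{ij}=\sup\{x: (x,r_{-ij})\in\mathcal U$ and the game with weights $(x,r_{-ij})$ has a bias-induced pair $(\sigma',\tau')\in\Xi$ with $\sigma'(i)\ne j\}$. *)

(* Defs.v *)
From HB Require Import structures.
From mathcomp Require Import all_boot all_order all_algebra.
From mathcomp Require Import classical_sets reals constructive_ereal ereal.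
Set Implicit Arguments. Unset Strict Implicit. Unset Printing Implicit Defensive.
Import Order.TTheory GRing.Theory Num.Theory.
Local Open Scope ring_scope.

(* Game graph: vertices 'I_n, edge relation E (no multiple edges),
   Vmax : {set 'I_n} (Vmin is its complement), weights r : 'I_n -> 'I_n -> R
   (only the values on edges are ever used).
   A pair of policies (sigma, tau) is encoded as a single map p : 'I_n -> 'I_n
   with p i = sigma i for i in Vmax and p i = tau i for i in Vmin. *)

Section Game.
Variables (R : realType) (n : nat) (E : rel 'I_n) (Vmax : {set 'I_n}).

Definition upd (r : 'I_n -> 'I_n -> R) (i j : 'I_n) (x : R) : 'I_n -> 'I_n -> R :=
  fun a b => if (a == i) && (b == j) then x else r a b.

Definition ergodic_sol (r : 'I_n -> 'I_n -> R) (lam : R) (u : 'I_n -> R) : Prop :=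
  forall i : 'I_n,
    (exists2 j, E i j & lam + u i = r i j + u j) /\
    (forall j, E i j ->
       if i \in Vmax then r i j + u j <= lam + u i else lam + u i <= r i j + u j).

Definition is_bias (r : 'I_n -> 'I_n -> R) (u : 'I_n -> R) : Prop :=
  exists lam, ergodic_sol r lam u.

Definition ergodic_graph : Prop :=
  forall r : 'I_n -> 'I_n -> R, exists lam u, ergodic_sol r lam u.

Definition policy (p : 'I_n -> 'I_n) : Prop := forall i, E i (p i).

Definition bias_induced (r : 'I_n -> 'I_n -> R) (p : 'I_n -> 'I_n) : Prop :=
  policy p /\ exists lam u, ergodic_sol r lam u /\
    forall i, lam + u i = r i (p i) + u (p i).

(* directed cycles of the out-degree-one graph G^{sigma,tau}:
   vertex sets of orbits of periodic vertices *)
Definition periodic (p : 'I_n -> 'I_n) : {set 'I_n} :=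
  [set x | fconnect p (p x) x].
Definition cycles (p : 'I_n -> 'I_n) : {set {set 'I_n}} :=
  [set [set y | fconnect p x y] | x in periodic p].

Definition Xi (p : 'I_n -> 'I_n) : Prop := policy p /\ #|cycles p| = 1%N.

Definition lam_pol (p : 'I_n -> 'I_n) (r : 'I_n -> 'I_n -> R) : R :=
  (\sum_(c in periodic p) r c (p c)) / #|periodic p|%:R.

Definition cyc_min (p : 'I_n -> 'I_n) : option 'I_n :=
  [pick x in periodic p | [forall y in periodic p, (x <= y)%N]].

Definition u_pol (p : 'I_n -> 'I_n) (r : 'I_n -> 'I_n -> R) (l : 'I_n) : R :=
  match cyc_min p with
  | Some m => \sum_(k < findex p l m)
                (r (iter k p l) (iter k.+1 p l) - lam_pol p r)
  | None => 0
  end.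

Definition P_set (p : 'I_n -> 'I_n) (r : 'I_n -> 'I_n -> R) : Prop :=
  bias_induced r p /\ forall q, bias_induced r q -> forall i, q i = p i.

Definition U_set (r : 'I_n -> 'I_n -> R) : Prop :=
  exists p, Xi p /\ P_set p r.

Definition Zset (r : 'I_n -> 'I_n -> R) (i j : 'I_n) : set R :=
  [set x | U_set (upd r i j x) /\
     exists q, [/\ bias_induced (upd r i j x) q, Xi q & q i != j]].

Definition Z (r : 'I_n -> 'I_n -> R) (i j : 'I_n) : \bar R :=
  if i \in Vmax then ereal_sup [set x%:E | x in Zset r i j]
  else ereal_inf [set x%:E | x in Zset r i j].

End Game.

(* Main.v *)
Require Import Defs.
From HB Require Import structures.
From mathcomp Require Import all_boot all_order all_algebra.
From mathcomp Require Import classical_sets reals constructive_ereal ereal.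
From mathcomp Require Import lra.
Set Implicit Arguments. Unset Strict Implicit.
Import Order.TTheory GRing.Theory Num.Theory.
Local Open Scope ring_scope.

Lemma reach_periodic n (p : 'I_n -> 'I_n) (s : 'I_n) :
  exists k, iter k p s \in periodic p.
Proof.
have [a [b [ab Hab]]] : exists a b, (a < b)%N /\ iter a p s = iter b p s.
  apply: boolp.contrapT => H.
  pose f := fun k : 'I_n.+1 => iter k p s.
  have finj : injective f.
    move=> a b Hf; apply/val_inj/eqP; case: (ltngtP a b) => // Hlt.
    - by exfalso; apply: H; exists a, b.
    - by exfalso; apply: H; exists b, a.
  by have := leq_card f finj; rewrite !card_ord ltnn.
exists a; rewrite inE.
have Eb : b = ((b - a).-1.+1 + a)%N by rewrite prednK ?subnK ?subn_gt0 // ltnW.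
rewrite Eb iterD iterSr in Hab.
by rewrite [X in fconnect _ _ X]Hab fconnect_iter.
Qed.

Lemma cyc_conn n (E : rel 'I_n) (p : 'I_n -> 'I_n) y z :
  Xi E p -> y \in periodic p -> z \in periodic p -> fconnect p y z.
Proof.
move=> [_ H1] Hy Hz; have [C HC] := cards1P (introT eqP H1).
have Cy : [set w | fconnect p y w] \in cycles p by apply: imset_f.
have Cz : [set w | fconnect p z w] \in cycles p by apply: imset_f.
move: Cy Cz; rewrite HC !inE => /eqP <- /eqP Hz'.
have : z \in [set w | fconnect p z w] by rewrite inE connect0.
by rewrite Hz' inE.
Qed.

Lemma closed_iter n (p : 'I_n -> 'I_n) (P : pred 'I_n) s :
  (forall l, P l -> P (p l)) -> P s -> forall k, P (iter k p s).
Proof. by move=> HP Ps; elim=> //= k IH; apply: HP. Qed.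

Lemma closed_inter n (E : rel 'I_n) (p : 'I_n -> 'I_n) (P Q : pred 'I_n) s t :
  Xi E p -> (forall l, P l -> P (p l)) -> (forall l, Q l -> Q (p l)) ->
  P s -> Q t -> exists z, P z /\ Q z.
Proof.
move=> HX HP HQ Ps Qt.
have [k Hk] := reach_periodic p s; have [k' Hk'] := reach_periodic p t.
have Hc := cyc_conn HX Hk Hk'.
exists (iter k' p t); split; last exact: closed_iter.
rewrite -(iter_findex Hc) -iterD; exact: closed_iter.
Qed.

Lemma reach_all n (E : rel 'I_n) (p : 'I_n -> 'I_n) l m :
  Xi E p -> m \in periodic p -> fconnect p l m.
Proof.
move=> HX Hm; have [k Hk] := reach_periodic p l.
exact: connect_trans (fconnect_iter _ _ _) (cyc_conn HX Hk Hm).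
Qed.

Lemma per_of_iter n (p : 'I_n -> 'I_n) a k : iter k.+1 p a = a -> a \in periodic p.
Proof. by move=> H; rewrite inE -{2}H iterSr fconnect_iter. Qed.

Lemma iter_of_per n (p : 'I_n -> 'I_n) a : a \in periodic p -> exists k, iter k.+1 p a = a.
Proof. by rewrite inE => /iter_findex H; exists (findex p (p a) a); rewrite iterSr. Qed.

Lemma iter_per n (p : 'I_n -> 'I_n) a k m : iter k p a = a -> iter (k * m) p a = a.
Proof. by move=> H; elim: m => [|m IH]; rewrite ?muln0 // mulnS iterD IH. Qed.

Lemma per_closed n (p : 'I_n -> 'I_n) a : a \in periodic p -> p a \in periodic p.
Proof.
case/iter_of_per => k H; apply: (@per_of_iter _ _ _ k).
by rewrite -iterSr iterS H.
Qed.

Lemma per_inj n (p : 'I_n -> 'I_n) : {in periodic p &, injective p}.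
Proof.
move=> a b /iter_of_per [ka Ha] /iter_of_per [kb Hb] Hab.
have HaN := iter_per kb.+1 Ha; have HbN := iter_per ka.+1 Hb.
rewrite mulnC in HbN.
by rewrite -HaN -HbN mulSn addSn !iterSr Hab.
Qed.

Lemma per_imset n (p : 'I_n -> 'I_n) : p @: periodic p = periodic p.
Proof.
apply/eqP; rewrite eqEcard card_in_imset ?leqnn ?andbT; last exact: per_inj.
by apply/fintype.subsetP => y /imsetP [x Hx ->]; apply: per_closed.
Qed.

Lemma tele (R : realType) (g : nat -> R) K :
  \sum_(k < K) (g k - g k.+1) = g 0%N - g K.
Proof.
elim: K => [|K IH]; first by rewrite big_ord0 subrr.
by rewrite big_ord_recr /= IH addrA subrK.
Qed.

Lemma pol_values (R : realType) n (E : rel 'I_n) (p : 'I_n -> 'I_n)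
   (w : 'I_n -> 'I_n -> R) lam u (i0 : 'I_n) :
  Xi E p -> (forall l, lam + u l = w l (p l) + u (p l)) ->
  lam_pol p w = lam /\ forall a b, u_pol p w a - u_pol p w b = u a - u b.
Proof.
move=> HX Hu.
have [k0 Hk0] := reach_periodic p i0.
have Hlam : lam_pol p w = lam.
  rewrite /lam_pol.
  have -> : \sum_(c in periodic p) w c (p c) =
            \sum_(c in periodic p) (lam + u c - u (p c)).
    by apply: eq_bigr => c _; rewrite Hu addrK.
  rewrite big_split /= big_split /= sumrN sumr_const.
  rewrite -(big_imset (fun c => u c) (@per_inj _ p)) per_imset addrK.
  have Hc : #|periodic p|%:R != 0 :> R.
    by rewrite pnatr_eq0 -lt0n; apply/card_gt0P; exists (iter k0 p i0).
  by rewrite -[lam *+ _]mulr_natr mulfK.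
split => //.
have [m Hcm Hm] : exists2 m, cyc_min p = Some m & m \in periodic p.
  rewrite /cyc_min; case: pickP => [m /andP [Hm _] | Hnone]; first by exists m.
  exfalso.
  case: (arg_minnP (fun x : 'I_n => val x) Hk0) => m Hm Hmin.
  have Hm' : m \in periodic p := Hm.
  move: (Hnone m) => /=; rewrite Hm' /=; move/negP; apply; apply/forallP => y.
  by apply/implyP => Hy; apply: Hmin.
have Hupol : forall a, u_pol p w a = u a - u m.
  move=> a; rewrite /u_pol Hcm Hlam.
  have -> : \sum_(k < findex p a m) (w (iter k p a) (iter k.+1 p a) - lam) =
            \sum_(k < findex p a m) (u (iter k p a) - u (iter k.+1 p a)).
    by apply: eq_bigr => k _; rewrite iterS; have := Hu (iter k p a); lra.
  by rewrite (tele (fun k => u (iter k p a))) iter_findex //; apply: reach_all HX Hm.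
by move=> a b; rewrite !Hupol; lra.
Qed.

Definition strict_at (R : realType) n (E : rel 'I_n) (Vmax : {set 'I_n})
  (p : 'I_n -> 'I_n) (w : 'I_n -> 'I_n -> R) lam (u : 'I_n -> R) :=
  forall l e, E l e -> e != p l ->
    if l \in Vmax then w l e + u e < lam + u l else lam + u l < w l e + u e.

Lemma strict_of_P (R : realType) n (E : rel 'I_n) Vmax p (w : 'I_n -> 'I_n -> R) lam u :
  P_set E Vmax p w -> ergodic_sol E Vmax w lam u ->
  (forall l, lam + u l = w l (p l) + u (p l)) -> strict_at E Vmax p w lam u.
Proof.
move=> [[Hpol _] Huniq] Hsol Hp l e Hle Hne.
suff Hc : lam + u l = w l e + u e -> False.
  have := (Hsol l).2 e Hle; case: ifP => _ H; rewrite lt_neqAle H andbT;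
  apply/eqP => Heq; apply: Hc; by rewrite Heq.
move=> Heq.
pose q := fun v => if v == l then e else p v.
have Hq : bias_induced E Vmax w q.
  split; first by move=> v; rewrite /q; case: eqP => [->|_].
  exists lam, u; split => // v; rewrite /q; case: eqP => [->|_] //.
have := Huniq q Hq l; rewrite /q eqxx => Hel.
by rewrite Hel eqxx in Hne.
Qed.

Lemma unique_of_strict (R : realType) n (E : rel 'I_n) Vmax p (w : 'I_n -> 'I_n -> R) lam u :
  Xi E p -> ergodic_sol E Vmax w lam u ->
  (forall l, lam + u l = w l (p l) + u (p l)) -> strict_at E Vmax p w lam u ->
  P_set E Vmax p w.
Proof.
move=> HX Hsol Hp Hst; split.
  by split; [exact: HX.1 | exists lam, u].
move=> q [Hqpol [lam' [u' [Hsol' Hq]]]] l0.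
pose d := fun l => u' l - u l; pose c := lam' - lam.
have Hv : forall l,
  (l \in Vmax -> [/\ c + d l <= d (q l), (q l != p l -> c + d l < d (q l)) & d (p l) <= c + d l]) /\
  (l \notin Vmax -> [/\ d (q l) <= c + d l, (q l != p l -> d (q l) < c + d l) & c + d l <= d (p l)]).
  move=> l; have H1 := (Hsol l).2 (q l) (Hqpol l); have H2 := (Hsol' l).2 (p l) (HX.1 l).
  have H3 := Hst l (q l) (Hqpol l); have H4 := Hq l; have H5 := Hp l.
  rewrite /d /c; split => Hm.
    rewrite Hm in H1 H2 H3; split.
    - by lra.
    - by move=> /H3; lra.
    - by lra.
  rewrite (negbTE Hm) in H1 H2 H3; split.
  - by lra.
  - by move=> /H3; lra.
  - by lra.
case: (@Order.TotalTheory.arg_maxP _ _ _ l0 xpredT d isT) => k1 _ Hk1.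
case: (@Order.TotalTheory.arg_minP _ _ _ l0 xpredT d isT) => k2 _ Hk2.
have Hmax : forall l, d l <= d k1 by move=> l; apply: Hk1.
have Hmin : forall l, d k2 <= d l by move=> l; apply: Hk2.
have Hc0 : c = 0.
  apply/eqP; rewrite eq_le; apply/andP; split.
    case: (boolP (k1 \in Vmax)) => Hm.
      by have [H1 _ _] := (Hv k1).1 Hm; have := Hmax (q k1); lra.
    by have [_ _ H1] := (Hv k1).2 Hm; have := Hmax (p k1); lra.
  case: (boolP (k2 \in Vmax)) => Hm.
    by have [_ _ H1] := (Hv k2).1 Hm; have := Hmin (p k2); lra.
  by have [H1 _ _] := (Hv k2).2 Hm; have := Hmin (q k2); lra.
have [z [/eqP Hz1 /eqP Hz2]] : exists z, (d z == d k1) /\ (d z == d k2).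
  apply: (closed_inter HX (s := k1) (t := k2)) => //= l /eqP Hl; apply/eqP.
    case: (boolP (l \in Vmax)) => Hm.
      have [H1 H2 H3] := (Hv l).1 Hm.
      case: (eqVneq (q l) (p l)) => Hqp.
        by rewrite -Hqp; have := Hmax (q l); lra.
      by have := H2 Hqp; have := Hmax (q l); lra.
    by have [H1 H2 H3] := (Hv l).2 Hm; have := Hmax (p l); lra.
  case: (boolP (l \in Vmax)) => Hm.
    by have [H1 H2 H3] := (Hv l).1 Hm; have := Hmin (p l); lra.
  have [H1 H2 H3] := (Hv l).2 Hm.
  case: (eqVneq (q l) (p l)) => Hqp.
    by rewrite -Hqp; have := Hmin (q l); lra.
  by have := H2 Hqp; have := Hmin (q l); lra.
have Hall : forall l, d l = d k1.
  by move=> l; have := Hmax l; have := Hmin l; lra.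
apply/eqP; apply/negP => /negP Hne.
case: (boolP (l0 \in Vmax)) => Hm.
  by have [_ H2 _] := (Hv l0).1 Hm; have := H2 Hne; rewrite !Hall; lra.
by have [_ H2 _] := (Hv l0).2 Hm; have := H2 Hne; rewrite !Hall; lra.
Qed.

Lemma pol_ext (R : realType) n (p : 'I_n -> 'I_n) (w w' : 'I_n -> 'I_n -> R) :
  (forall l, w l (p l) = w' l (p l)) ->
  lam_pol p w = lam_pol p w' /\ forall a, u_pol p w a = u_pol p w' a.
Proof.
move=> Hw.
have Hl : lam_pol p w = lam_pol p w'.
  by rewrite /lam_pol; congr (_ / _); apply: eq_bigr => c _; rewrite Hw.
split => // a; rewrite /u_pol; case: cyc_min => // m.
by apply: eq_bigr => k _; rewrite Hl iterS Hw.
Qed.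

Lemma upd_p (R : realType) n (r : 'I_n -> 'I_n -> R) (p : 'I_n -> 'I_n) i j x l :
  p i != j -> upd r i j x l (p l) = r l (p l).
Proof.
move=> Hn; rewrite /upd; case: ifP => [/andP [/eqP Hl /eqP He]|//].
by rewrite -Hl He eqxx in Hn.
Qed.

Lemma fwd (R : realType) n (E : rel 'I_n) Vmax p (r : 'I_n -> 'I_n -> R) lam u i j x :
  Xi E p -> P_set E Vmax p r -> ergodic_sol E Vmax r lam u ->
  (forall l, lam + u l = r l (p l) + u (p l)) -> E i j -> p i != j ->
  (if i \in Vmax then x < lam + u i - u j else lam + u i - u j < x) ->
  P_set E Vmax p (upd r i j x).
Proof.
move=> HX HP Hsol Hp Hij Hn Hx.
have Hst := strict_of_P HP Hsol Hp.
have Hp' : forall l, lam + u l = upd r i j x l (p l) + u (p l).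
  by move=> l; rewrite upd_p.
apply: (unique_of_strict (lam := lam) (u := u)) => //.
- move=> l; split; first by exists (p l); [exact: HX.1 | exact: Hp'].
  move=> e He; rewrite /upd; case: (boolP ((l == i) && (e == j))) => [/andP [/eqP El /eqP Ee] | Hle].
    by rewrite El Ee /=; case: ifP Hx => _ Hx; lra.
  rewrite /=.
  exact: (Hsol l).2.
- move=> l e He Hne; rewrite /upd; case: (boolP ((l == i) && (e == j))) => [/andP [/eqP El /eqP Ee] | Hle].
    by rewrite El Ee /=; case: ifP Hx => _ Hx; lra.
  rewrite /=.
  exact: Hst.
Qed.

Lemma upd_upd (R : realType) n (r : 'I_n -> 'I_n -> R) i j x :
  upd (upd r i j x) i j (r i j) = r.
Proof.
apply: boolp.funext => a; apply: boolp.funext => b; rewrite /upd.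
by case: (boolP ((a == i) && (b == j))) => [/andP [/eqP -> /eqP ->]|//].
Qed.

Unset Implicit Arguments.
Theorem mainTheorem13 (R : realType) (n : nat) (E : rel 'I_n) (Vmax : {set 'I_n})
  (Hout : forall i : 'I_n, exists j, E i j)
  (Herg : ergodic_graph R E Vmax)
  (r : 'I_n -> 'I_n -> R) (p : 'I_n -> 'I_n)
  (HXi : Xi E p) (HP : P_set E Vmax p r)
  (i j : 'I_n) (Hij : E i j) (Hnot : p i != j) :
  Z E Vmax r i j = (lam_pol p r + u_pol p r i - u_pol p r j)%:E.
Proof.
have [[Hpol [lam [u [Hsol Hp]]]] Huniq] := HP.
have [Hlam Hu] := pol_values i HXi Hp.
rewrite Hlam -addrA Hu addrA.
set th := lam + u i - u j.
have Hst := strict_of_P HP Hsol Hp.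
have Hji : j != p i by rewrite eq_sym.
have Hstij := Hst i j Hij Hji.
have In : forall x, (if i \in Vmax then x < th else th < x) -> Zset E Vmax r i j x.
  move=> x Hx; have HPx := fwd HXi HP Hsol Hp Hij Hnot Hx.
  split; first by exists p.
  by exists p; split => //; case: HPx.
have Out : forall x, Zset E Vmax r i j x -> (if i \in Vmax then x <= th else th <= x).
  move=> x [[p' [HX' HP']] [q [Hqb HXq Hqi]]].
  have Hqp : q = p' := boolp.funext (HP'.2 q Hqb); subst q.
  have [[Hpol' [lam' [u' [Hsol' Hp']]]] Huniq'] := HP'.
  have Hst' := strict_of_P HP' Hsol' Hp'.
  have Hji' : j != p' i by rewrite eq_sym.
  have Hstij' := Hst' i j Hij Hji'.
  set th' := lam' + u' i - u' j.
  have Hcase : (if i \in Vmax then r i j < th' else th' < r i j) -> th = th'.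
    move=> Hr.
    have HPr := fwd HX' HP' Hsol' Hp' Hij Hqi Hr.
    rewrite upd_upd in HPr.
    have Hpp : p' = p := boolp.funext (Huniq p' HPr.1); subst p'.
    have [Hl1 Hu1] := pol_values i HXi Hp.
    have [Hl2 Hu2] := pol_values i HXi Hp'.
    have [Hl3 Hu3] := pol_ext (w := r) (w' := upd r i j x) (fun l => esym (upd_p r x l Hnot)).
    rewrite /th /th' -!addrA -Hu1 -Hu2 -Hl1 -Hl2 Hl3 !Hu3 //.
  rewrite /upd !eqxx /= in Hstij'.
  case: ifP Hstij Hstij' Hcase => Hm Hs Hs' Hc; rewrite /th /th' in Hc *.
    rewrite leNgt; apply/negP => Hlt.
    case: (ltP (r i j) th') => Hr; rewrite /th' in Hr.
      by have := Hc Hr; lra.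
    by lra.
  rewrite leNgt; apply/negP => Hlt.
  case: (ltP th' (r i j)) => Hr; rewrite /th' in Hr.
    by have := Hc Hr; lra.
  by lra.
rewrite /Z; case: ifP In Out => Hm In Out.
  apply/eqP; rewrite eq_le; apply/andP; split.
    by apply: ge_ereal_sup => _ [x Hx <-]; rewrite lee_fin; apply: Out.
  apply/lee_subgt0Pr => e e0; apply: ereal_sup_ubound.
  by exists (th - e); [apply: In; lra | rewrite EFinB].
apply/eqP; rewrite eq_le; apply/andP; split.
  apply/lee_addgt0Pr => e e0; apply: ereal_inf_lbound.
  by exists (th + e); [apply: In; lra | rewrite EFinD].
by apply: le_ereal_inf_tmp => _ [x Hx <-]; rewrite lee_fin; apply: Out.
Qed.
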